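(* Let $g(x)=\dfrac{1}{1-\cos(x)}$ for $x\in(0,2\pi)$. (i) Let $n\ge0$ be an even integer. For all $x,y>0$ with $x+y\le\pi$, $$\lambda_n\le g^{(n)}(x)+g^{(n)}(y)-g^{(n)}(x+y),\qquad \lambda_n=\frac{2}{n+2}\,(2^{n+2}-1)^2\,|B_{n+2}|,$$ and $\lambda_n$ is the best possible lower bound (i.e., the largest constant, depending only on $n$, for which the inequality holds for all such $x,y$). (ii) Let $n\ge1$ be an odd integer. For all $x,y>0$ with $x+y\le\pi$, $$\mu_n\le g^{(n)}(x+y)-g^{(n)}(x)-g^{(n)}(y),\qquad \mu_n=2\,|E_{n+1}|,$$ and $\mu_n$ is the best possible lower bound (i.e., the largest constant, depending only on $n$, for which the inequality holds for all such $x,y$).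
   Context: $B_m$ denotes the $m$-th Bernoulli number (defined by $\frac{t}{e^t-1}=\sum_{m\ge0}B_m\frac{t^m}{m!}$) and $E_m$ denotes the $m$-th Euler number (defined by $\frac{1}{\cosh t}=\sum_{m\ge0}E_m\frac{t^m}{m!}$). *)

(* Defs.v *)
From Stdlib Require Import Reals.
From Coquelicot Require Import Coquelicot.
Open Scope R_scope.

Definition bern_gen (t : R) : R :=
  match Req_EM_T t 0 with
  | left _ => 1
  | right _ => t / (exp t - 1)
  end.

(* B_m = m-th Taylor coefficient times m!, i.e. the m-th derivative at 0. *)
Definition bernoulli (m : nat) : R := Derive_n bern_gen m 0.

Definition euler_num (m : nat) : R := Derive_n (fun t => / cosh t) m 0.

(* g(x) = 1/(1 - cos x); only evaluated (with derivatives) on (0, pi]. *)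
Definition g (x : R) : R := / (1 - cos x).

Definition lambda_n (n : nat) : R :=
  2 / (INR n + 2) * (2 ^ (n + 2) - 1) ^ 2 * Rabs (bernoulli (n + 2)).

Definition mu_n (n : nat) : R := 2 * Rabs (euler_num (n + 1)).

(* Main.v *)
Require Import Defs.
From Stdlib Require Import Reals Lra Lia Factorial.
From Coquelicot Require Import Coquelicot.
Open Scope R_scope.


Definition fam (D : R -> Prop) (F : nat -> R -> R) :=
  forall k y, D y -> is_derive (F k) y (F (S k) y).
Definition famN (N : nat) (D : R -> Prop) (F : nat -> R -> R) :=
  forall k y, (k < N)%nat -> D y -> is_derive (F k) y (F (S k) y).

Lemma famN_Derive_n D (HD : open D) N F f :
  famN N D F -> (forall y, D y -> f y = F 0%nat y) ->
  forall k y, (k <= N)%nat -> D y -> Derive_n f k y = F k y.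
Proof.
  intros HF Hf k. induction k as [|k IH]; intros y Hk Hy.
  - simpl. now apply Hf.
  - simpl. rewrite (Derive_ext_loc _ (F k)).
    + apply is_derive_unique. apply HF; auto; lia.
    + apply (filter_imp D). intros z Hz. apply IH; auto; lia.
      now apply HD.
Qed.

Lemma fam_famN D N F : fam D F -> famN N D F.
Proof. intros H k y _ Hy; now apply H. Qed.

Lemma fam_Derive_n D (HD : open D) F f :
  fam D F -> (forall y, D y -> f y = F 0%nat y) ->
  forall k y, D y -> Derive_n f k y = F k y.
Proof.
  intros HF Hf k y Hy. apply (famN_Derive_n D HD (S k) F f); auto.
  now apply fam_famN.
Qed.

Lemma fam_unique D (HD : open D) F G : fam D F -> fam D G ->
  (forall y, D y -> F 0%nat y = G 0%nat y) -> forall k y, D y -> F k y = G k y.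
Proof.
  intros HF HG H0 k y Hy.
  rewrite <- (fam_Derive_n D HD F (F 0%nat) HF (fun _ _ => eq_refl) k y Hy).
  apply (fam_Derive_n D HD G); auto.
Qed.

Definition Sm D f := fam D (Derive_n f).

Lemma famN_Sm_aux D (HD : open D) N F f :
  famN N D F -> (forall y, D y -> f y = F 0%nat y) ->
  famN N D (Derive_n f).
Proof.
  intros HF Hf k y Hk Hy.
  assert (E : forall j z, (j <= N)%nat -> D z -> Derive_n f j z = F j z)
    by (apply famN_Derive_n; auto).
  rewrite (E (S k)); auto; try lia.
  apply (is_derive_ext_loc (F k)).
  - apply (filter_imp D). intros z Hz. symmetry. apply E; auto; lia. now apply HD.
  - apply HF; auto.
Qed.

Lemma fam_Sm D (HD : open D) F f :
  fam D F -> (forall y, D y -> f y = F 0%nat y) -> Sm D f.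
Proof.
  intros HF Hf k y Hy. apply (famN_Sm_aux D HD (S k) F f); auto.
  now apply fam_famN.
Qed.

Lemma Sm_ext D f g : (forall x, f x = g x) -> Sm D f -> Sm D g.
Proof.
  intros E H k y Hy.
  apply (is_derive_ext (Derive_n f k)).
  - intros t. now apply Derive_n_ext.
  - rewrite <- (Derive_n_ext f g (S k) y E). now apply H.
Qed.

Fixpoint binom (n k : nat) : R :=
  match n, k with
  | O, O => 1
  | O, S _ => 0
  | S _, O => 1
  | S n', S k' => binom n' k' + binom n' (S k')
  end.

Lemma binom_0 n : binom n 0 = 1.
Proof. destruct n; reflexivity. Qed.

Lemma binom_gt n k : (n < k)%nat -> binom n k = 0.
Proof.
  revert k; induction n; intros k Hk; destruct k; simpl; try lia; auto.
  rewrite !IHn; try lia. ring.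
Qed.

Lemma binom_nn n : binom n n = 1.
Proof. induction n; simpl; auto. rewrite IHn, binom_gt; try lia. ring. Qed.

Lemma binom_ge0 n k : 0 <= binom n k.
Proof.
  revert k; induction n; intros k; destruct k; simpl; try lra.
  pose proof (IHn k); pose proof (IHn (S k)). lra.
Qed.

Lemma sum_shift (c : nat -> R) k :
  sum_f_R0 c (S k) = c 0%nat + sum_f_R0 (fun j => c (S j)) k.
Proof.
  induction k.
  - simpl. ring.
  - rewrite tech5, IHk. simpl. ring.
Qed.

Lemma sum_plus (a b : nat -> R) k :
  sum_f_R0 (fun j => a j + b j) k = sum_f_R0 a k + sum_f_R0 b k.
Proof. induction k; simpl; [ring| rewrite IHk; ring]. Qed.

Lemma sum_ext (a b : nat -> R) k :
  (forall j, (j <= k)%nat -> a j = b j) -> sum_f_R0 a k = sum_f_R0 b k.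
Proof.
  induction k; intros H; simpl. apply H; lia.
  rewrite IHk, H; auto.
Qed.

Lemma leib_step (T : nat -> nat -> R) k :
  sum_f_R0 (fun j => binom k j * (T (S j) (k - j)%nat + T j (S k - j)%nat)) k =
  sum_f_R0 (fun j => binom (S k) j * T j (S k - j)%nat) (S k).
Proof.
  rewrite sum_shift. simpl (binom (S k) 0). 
  transitivity (sum_f_R0 (fun j => binom k j * T (S j) (k - j)%nat) k +
                sum_f_R0 (fun j => binom k j * T j (S k - j)%nat) k).
  { rewrite <- sum_plus. apply sum_ext. intros; ring. }
  assert (E : sum_f_R0 (fun j => binom k j * T j (S k - j)%nat) k =
     T 0%nat (S k) + sum_f_R0 (fun j => binom k (S j) * T (S j) (k - j)%nat) k).
  { set (c := fun j => binom k j * T j (S k - j)%nat).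
    assert (sum_f_R0 c (S k) = sum_f_R0 c k) as H1.
    { rewrite tech5. unfold c at 2. rewrite binom_gt by lia. ring. }
    rewrite <- H1, sum_shift. unfold c at 1. rewrite binom_0. simpl. ring_simplify.
    f_equal. }
  rewrite E.
  replace (S k - 0)%nat with (S k) by lia.
  assert (E2 : sum_f_R0 (fun j => binom (S k) (S j) * T (S j) (S k - S j)%nat) k =
     sum_f_R0 (fun j => binom k j * T (S j) (k - j)%nat) k +
     sum_f_R0 (fun j => binom k (S j) * T (S j) (k - j)%nat) k).
  { rewrite <- sum_plus. apply sum_ext. intros j _. simpl. ring. }
  rewrite E2. ring.
Qed.

Lemma is_derive_sum (u : nat -> R -> R) (du : nat -> R) y n :
  (forall j, (j <= n)%nat -> is_derive (u j) y (du j)) ->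
  is_derive (fun x => sum_f_R0 (fun j => u j x) n) y (sum_f_R0 du n).
Proof.
  induction n; intros H; simpl.
  - apply H; lia.
  - apply (is_derive_plus (fun x => sum_f_R0 (fun j => u j x) n) (u (S n))).
    apply IHn; intros; apply H; lia. apply H; lia.
Qed.

Definition leib (F G : nat -> R -> R) k y :=
  sum_f_R0 (fun j => binom k j * F j y * G (k - j)%nat y) k.

Lemma leib_famN N D F G : famN N D F -> famN N D G -> famN N D (leib F G).
Proof.
  intros HF HG k y Hk Hy. unfold leib.
  apply (is_derive_ext (fun t => sum_f_R0 (fun j => binom k j * (F j t * G (k-j)%nat t)) k)).
  { intros t. apply sum_ext. intros j _. ring. }
  unfold leib.
  replace (sum_f_R0 (fun j => binom (S k) j * F j y * G (S k - j)%nat y) (S k)) with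
    (sum_f_R0 (fun j => binom (S k) j * (F j y * G (S k - j)%nat y)) (S k))
    by (apply sum_ext; intros; ring).
  rewrite <- (leib_step (fun a b => F a y * G b y)).
  apply is_derive_sum. intros j Hj.
  apply (is_derive_scal (fun x => F j x * G (k-j)%nat x)).
  replace (S k - j)%nat with (S (k - j)) by lia.
  eapply is_derive_ext; [intros t; reflexivity|].
  replace (F (S j) y * G (k - j)%nat y + F j y * G (S (k - j)) y) with
    (plus (mult (F (S j) y) (G (k - j)%nat y)) (mult (F j y) (G (S (k - j)) y))) by reflexivity.
  apply (is_derive_mult (F j) (G (k-j)%nat)).
  apply HF; auto; lia. apply HG; auto; lia. intros; apply Rmult_comm.
Qed.

Lemma leib_fam D F G : fam D F -> fam D G -> fam D (leib F G).
Proof.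
  intros HF HG k y Hy.
  apply (leib_famN (S k) D); auto; now apply fam_famN.
Qed.

Lemma leib_0 F G y : leib F G 0 y = F 0%nat y * G 0%nat y.
Proof. unfold leib. simpl. ring. Qed.

Lemma Sm_mult D (HD : open D) f g : Sm D f -> Sm D g -> Sm D (fun x => f x * g x).
Proof.
  intros Hf Hg. apply (fam_Sm D HD (leib (Derive_n f) (Derive_n g))).
  now apply leib_fam. intros y _. rewrite leib_0. reflexivity.
Qed.

Lemma Sm_plus D (HD : open D) f g : Sm D f -> Sm D g -> Sm D (fun x => f x + g x).
Proof.
  intros Hf Hg. apply (fam_Sm D HD (fun k y => Derive_n f k y + Derive_n g k y)).
  - intros k y Hy. apply (is_derive_plus (Derive_n f k) (Derive_n g k)); auto.
  - intros; reflexivity.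
Qed.

Lemma Sm_scal D (HD : open D) c f : Sm D f -> Sm D (fun x => c * f x).
Proof.
  intros Hf. apply (fam_Sm D HD (fun k y => c * Derive_n f k y)).
  - intros k y Hy. apply (is_derive_scal (Derive_n f k)); auto.
  - intros; reflexivity.
Qed.

Lemma isd_const (c y : R) : is_derive (fun _ => c) y 0.
Proof. auto_derive; auto. Qed.
Lemma isd_id (y : R) : is_derive (fun x => x) y 1.
Proof. auto_derive; auto. Qed.

Definition cfam (c : R) (k : nat) (y : R) := match k with O => c | _ => 0 end.
Lemma cfam_fam D c : fam D (cfam c).
Proof.
  intros k y _. destruct k; simpl; apply isd_const.
Qed.

Lemma Sm_const D (HD : open D) c : Sm D (fun _ => c).
Proof. apply (fam_Sm D HD (cfam c)). apply cfam_fam. reflexivity. Qed.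

Definition idfam (k : nat) (y : R) := match k with O => y | 1%nat => 1 | _ => 0 end.
Lemma idfam_fam D : fam D idfam.
Proof.
  intros k y _. destruct k as [|[|k]]; simpl.
  apply isd_id. apply isd_const. apply isd_const.
Qed.

Lemma Sm_id D (HD : open D) : Sm D (fun x => x).
Proof. apply (fam_Sm D HD idfam). apply idfam_fam. reflexivity. Qed.

Lemma open_affine D c d : open D -> open (fun x => D (c * x + d)).
Proof.
  intros HD. apply (open_comp (fun x => c * x + d)); auto.
  intros x _. apply (ex_derive_continuous (fun x => c * x + d)). auto_derive. auto.
Qed.

Lemma fam_affine D F c d : fam D F ->
  fam (fun x => D (c * x + d)) (fun k x => c ^ k * F k (c * x + d)).
Proof.
  intros HF k y Hy.
  assert (H1 : is_derive (fun x => F k (c * x + d)) y (c * F (S k) (c * y + d))).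
  { assert (H2 := is_derive_comp (F k) (fun x => c * x + d) y (F (S k) (c * y + d)) c).
    apply H2. apply HF; auto.
    auto_derive; auto; ring. }
  replace (c ^ S k * F (S k) (c * y + d)) with (c ^ k * (c * F (S k) (c * y + d))) by (simpl; ring).
  now apply (is_derive_scal (fun x => F k (c * x + d))).
Qed.

Lemma Sm_affine D (HD : open D) f c d :
  Sm D f -> Sm (fun x => D (c * x + d)) (fun x => f (c * x + d)).
Proof.
  intros Hf. apply (fam_Sm _ (open_affine D c d HD) (fun k x => c ^ k * Derive_n f k (c * x + d))).
  now apply fam_affine. intros; simpl; ring.
Qed.

Lemma Sm_inv D (HD : open D) f : Sm D f -> (forall y, D y -> f y <> 0) ->
  Sm D (fun y => / f y).
Proof.
  intros Hf Hnz. set (h := fun y => / f y).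
  assert (Hd : forall y, D y -> is_derive h y (-1 * (Derive f y * (h y * h y)))).
  { intros y Hy. assert (H := is_derive_inv f y (Derive f y)).
    replace (-1 * (Derive f y * (h y * h y))) with (- Derive f y / f y ^ 2).
    apply H. apply (Hf 0%nat y Hy). auto.
    unfold h. field. auto. }
  set (F1 := fun j y => Derive_n f (S j) y).
  assert (HF1 : fam D F1). { intros j y Hy. apply Hf; auto. }
  assert (Hall : forall n, famN (S n) D (Derive_n h)).
  { induction n as [|n IH].
    - intros k y Hk Hy. replace k with 0%nat by lia. simpl.
      replace (Derive (fun x => h x) y) with (-1 * (Derive f y * (h y * h y))).
      apply Hd; auto. symmetry. apply is_derive_unique. apply Hd; auto.
    - intros k y Hk Hy. destruct (Nat.lt_ge_cases k (S n)) as [Hlt|Hge].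
      + apply IH; auto.
      + replace k with (S n) by lia. clear k Hk Hge.
        set (FP := fun k y => -1 * leib F1 (leib (Derive_n h) (Derive_n h)) k y).
        assert (HFP : famN (S n) D FP).
        { intros k z Hk Hz. apply (is_derive_scal (leib F1 (leib (Derive_n h) (Derive_n h)) k)).
          apply (leib_famN (S n) D); auto. now apply fam_famN. now apply (leib_famN (S n) D). }
        set (P := fun y => -1 * (Derive f y * (h y * h y))).
        assert (EP : forall k z, (k <= S n)%nat -> D z -> Derive_n P k z = FP k z).
        { apply famN_Derive_n; auto. intros z Hz. unfold FP, P. rewrite !leib_0.
          unfold F1. simpl. reflexivity. }
        assert (EH : forall z, D z -> Derive_n h (S n) z = FP n z).
        { intros z Hz. rewrite <- EP; auto.
          replace (S n) with (n + 1)%nat by lia. rewrite <- Derive_n_comp.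
          apply Derive_n_ext_loc. apply (filter_imp D); [|now apply HD].
          intros t Ht. simpl. apply is_derive_unique. now apply Hd. }
        assert (Hder : is_derive (Derive_n h (S n)) y (FP (S n) y)).
        { apply (is_derive_ext_loc (FP n)).
          apply (filter_imp D); [|now apply HD]. intros t Ht. symmetry. now apply EH.
          apply HFP; auto. }
        replace (Derive_n h (S (S n)) y) with (FP (S n) y). exact Hder.
        symmetry. simpl. apply is_derive_unique. exact Hder. }
  intros k y Hy. apply (Hall k); auto.
Qed.

Fixpoint eps (k : nat) : R :=
  match k with O => 1 | 1%nat => 1 | S (S j) => - eps j end.

Lemma eps_S k : eps (S k) = if Nat.even k then eps k else - eps k.
Proof.
  assert (H : forall k, (eps (S k) = if Nat.even k then eps k else - eps k) /\
                        (eps (S (S k)) = if Nat.even (S k) then eps (S k) else - eps (S k))).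
  { induction k0 as [|k0 [IH1 IH2]]; split.
    - reflexivity.
    - simpl. reflexivity.
    - exact IH2.
    - rewrite Nat.even_succ_succ. change (eps (S (S (S k0)))) with (- eps (S k0)).
      change (eps (S (S k0))) with (- eps k0).
      rewrite IH1. destruct (Nat.even k0); ring. }
  apply H.
Qed.

Lemma eps_sq k : eps k * eps k = 1.
Proof.
  assert (H : forall k, eps k * eps k = 1 /\ eps (S k) * eps (S k) = 1).
  { induction k0 as [|k0 [IH1 IH2]]; split; simpl; try ring; auto.
    rewrite <- IH1. ring. }
  apply H.
Qed.

Lemma eps_add_even k l : Nat.even l = true -> eps (k + l) = eps k * eps l.
Proof.
  assert (H : forall p, eps (k + 2 * p) = eps k * eps (2 * p)).
  { induction p. simpl. rewrite Nat.add_0_r. ring.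
    replace (k + 2 * S p)%nat with (S (S (k + 2 * p))) by lia.
    replace (2 * S p)%nat with (S (S (2 * p))) by lia.
    change (eps (S (S (k + 2 * p)))) with (- eps (k + 2 * p)).
    change (eps (S (S (2 * p)))) with (- eps (2 * p)).
    rewrite IHp. ring. }
  intros Hl. destruct (Nat.even_spec l) as [H1 _]. destruct (H1 Hl) as [p ->]. apply H.
Qed.

Definition Dall := fun _ : R => True.
Lemma open_Dall : open Dall. Proof. apply open_true. Qed.
Definition Dpi := fun x => - (PI / 2) < x < PI / 2.
Lemma open_Dpi : open Dpi.
Proof. apply open_and. apply open_gt. apply open_lt. Qed.

Definition cosF k x := if Nat.even k then eps k * cos x else - eps k * sin x.
Definition sinF k x := if Nat.even k then eps k * sin x else eps k * cos x.
Definition coshF k x := if Nat.even k then cosh x else sinh x.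
Definition sinhF k x := if Nat.even k then sinh x else cosh x.

Lemma isd_cosh x : is_derive cosh x (sinh x).
Proof. unfold cosh, sinh. auto_derive; auto. field. Qed.
Lemma isd_sinh x : is_derive sinh x (cosh x).
Proof. unfold cosh, sinh. auto_derive; auto. field. Qed.

Lemma cosF_fam : fam Dall cosF.
Proof.
  intros k y _. unfold cosF. rewrite Nat.even_succ, eps_S. unfold Nat.odd.
  destruct (Nat.even k); simpl.
  - auto_derive; auto. ring.
  - auto_derive; auto. ring.
Qed.
Lemma sinF_fam : fam Dall sinF.
Proof.
  intros k y _. unfold sinF. rewrite Nat.even_succ, eps_S. unfold Nat.odd.
  destruct (Nat.even k); simpl.
  - auto_derive; auto. ring.
  - auto_derive; auto. ring.
Qed.
Lemma coshF_fam : fam Dall coshF.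
Proof.
  intros k y _. unfold coshF. rewrite Nat.even_succ. unfold Nat.odd.
  destruct (Nat.even k); simpl. apply isd_cosh. apply isd_sinh.
Qed.
Lemma sinhF_fam : fam Dall sinhF.
Proof.
  intros k y _. unfold sinhF. rewrite Nat.even_succ. unfold Nat.odd.
  destruct (Nat.even k); simpl. apply isd_sinh. apply isd_cosh.
Qed.

Lemma Sm_cos : Sm Dall cos.
Proof. apply (fam_Sm _ open_Dall cosF cos cosF_fam). intros; unfold cosF; simpl; ring. Qed.
Lemma Sm_sin : Sm Dall sin.
Proof. apply (fam_Sm _ open_Dall sinF sin sinF_fam). intros; unfold sinF; simpl; ring. Qed.
Lemma Sm_cosh : Sm Dall cosh.
Proof. apply (fam_Sm _ open_Dall coshF cosh coshF_fam). intros; reflexivity. Qed.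
Lemma Sm_sinh : Sm Dall sinh.
Proof. apply (fam_Sm _ open_Dall sinhF sinh sinhF_fam). intros; reflexivity. Qed.

Lemma D_cos0 k : Derive_n cos k 0 = if Nat.even k then eps k else 0.
Proof.
  rewrite (fam_Derive_n _ open_Dall cosF cos cosF_fam); [|intros; unfold cosF; simpl; ring|exact I].
  unfold cosF. rewrite cos_0, sin_0. destruct (Nat.even k); ring.
Qed.
Lemma D_sin0 k : Derive_n sin k 0 = if Nat.even k then 0 else eps k.
Proof.
  rewrite (fam_Derive_n _ open_Dall sinF sin sinF_fam); [|intros; unfold sinF; simpl; ring|exact I].
  unfold sinF. rewrite cos_0, sin_0. destruct (Nat.even k); ring.
Qed.
Lemma cosh0 : cosh 0 = 1.
Proof. unfold cosh. rewrite Ropp_0, exp_0. field. Qed.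
Lemma sinh0 : sinh 0 = 0.
Proof. unfold sinh. rewrite Ropp_0, exp_0. field. Qed.
Lemma D_cosh0 k : Derive_n cosh k 0 = if Nat.even k then 1 else 0.
Proof.
  rewrite (fam_Derive_n _ open_Dall coshF cosh coshF_fam); [|intros; reflexivity|exact I].
  unfold coshF. rewrite cosh0, sinh0. destruct (Nat.even k); ring.
Qed.
Lemma D_sinh0 k : Derive_n sinh k 0 = if Nat.even k then 0 else 1.
Proof.
  rewrite (fam_Derive_n _ open_Dall sinhF sinh sinhF_fam); [|intros; reflexivity|exact I].
  unfold sinhF. rewrite cosh0, sinh0. destruct (Nat.even k); ring.
Qed.

Lemma cosh_pos' x : 0 < cosh x.
Proof. unfold cosh. pose proof (exp_pos x). pose proof (exp_pos (-x)). lra. Qed.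

Definition sec := fun x => / cos x.
Definition sech := fun x => / cosh x.
Definition tanh := fun x => sinh x * / cosh x.

Lemma Dpi_Dall : forall (f : R -> R), Sm Dall f -> Sm Dpi f.
Proof. intros f H k y _. apply H. exact I. Qed.

Lemma Sm_sec : Sm Dpi sec.
Proof.
  apply (Sm_inv Dpi open_Dpi cos). apply Dpi_Dall. apply Sm_cos.
  intros y [H1 H2]. apply Rgt_not_eq. apply cos_gt_0; lra.
Qed.
Lemma Sm_tan : Sm Dpi tan.
Proof.
  apply (Sm_ext _ (fun x => sin x * sec x)). intros; reflexivity.
  apply Sm_mult. apply open_Dpi. apply Dpi_Dall. apply Sm_sin. apply Sm_sec.
Qed.
Lemma Sm_sech : Sm Dall sech.
Proof.
  apply (Sm_inv Dall open_Dall cosh). apply Sm_cosh.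
  intros y _. apply Rgt_not_eq. apply cosh_pos'.
Qed.
Lemma Sm_tanh : Sm Dall tanh.
Proof.
  apply (Sm_mult Dall open_Dall sinh sech). apply Sm_sinh. apply Sm_sech.
Qed.

Lemma fam_restrict (D1 D2 : R -> Prop) F : (forall y, D2 y -> D1 y) -> fam D1 F -> fam D2 F.
Proof. intros H HF k y Hy. apply HF; auto. Qed.

Lemma fam_plus D F G : fam D F -> fam D G -> fam D (fun k y => F k y + G k y).
Proof. intros HF HG k y Hy. apply (is_derive_plus (F k) (G k)); auto. Qed.

Lemma fam_scal D c F : fam D F -> fam D (fun k y => c * F k y).
Proof. intros HF k y Hy. apply (is_derive_scal (F k)); auto. Qed.

Lemma fam_shift D F : fam D F -> fam D (fun k => F (S k)).
Proof. intros HF k y Hy. apply HF; auto. Qed.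

Lemma sum_nonneg (a : nat -> R) k : (forall j, (j <= k)%nat -> 0 <= a j) -> 0 <= sum_f_R0 a k.
Proof.
  induction k; intros H; simpl. apply H; lia.
  pose proof (H (S k) (le_n _)). assert (0 <= sum_f_R0 a k) by (apply IHk; intros; apply H; lia). lra.
Qed.

Lemma sum_scal (a : nat -> R) c k : sum_f_R0 (fun j => c * a j) k = c * sum_f_R0 a k.
Proof. induction k; simpl; [ring|rewrite IHk; ring]. Qed.

Lemma Dpi_loc y : Dpi y -> locally y Dpi.
Proof. intros; now apply open_Dpi. Qed.

Lemma cos_Dpi y : Dpi y -> 0 < cos y.
Proof. intros [H1 H2]. apply cos_gt_0; lra. Qed.

Lemma T_rec k y : Dpi y ->
  Derive_n tan (S k) y = cfam 1 k y + leib (Derive_n tan) (Derive_n tan) k y.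
Proof.
  intros Hy. replace (S k) with (k + 1)%nat by lia. rewrite <- Derive_n_comp.
  rewrite (Derive_n_ext_loc _ (fun x => 1 + tan x * tan x)).
  - apply (fam_Derive_n Dpi open_Dpi (fun k y => cfam 1 k y + leib (Derive_n tan) (Derive_n tan) k y)); auto.
    apply fam_plus. apply cfam_fam. apply leib_fam; apply Sm_tan.
    intros z _. rewrite leib_0. reflexivity.
  - apply (filter_imp Dpi); [|now apply Dpi_loc]. intros z Hz. simpl.
    assert (Hc : cos z <> 0) by (apply Rgt_not_eq, cos_Dpi; auto).
    change (Derive (fun x => tan x) z) with (Derive tan z).
    rewrite (is_derive_unique _ _ _ (is_derive_tan z Hc)). ring.
Qed.

Lemma sec_rec k y : Dpi y ->
  Derive_n sec (S k) y = leib (Derive_n sec) (Derive_n tan) k y.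
Proof.
  intros Hy. replace (S k) with (k + 1)%nat by lia. rewrite <- Derive_n_comp.
  rewrite (Derive_n_ext_loc _ (fun x => sec x * tan x)).
  - apply (fam_Derive_n Dpi open_Dpi (leib (Derive_n sec) (Derive_n tan))); auto.
    apply leib_fam. apply Sm_sec. apply Sm_tan.
    intros z _. rewrite leib_0. reflexivity.
  - apply (filter_imp Dpi); [|now apply Dpi_loc]. intros z Hz. simpl.
    assert (Hc := cos_Dpi z Hz).
    apply is_derive_unique. unfold sec, tan.
    assert (H := is_derive_inv cos z (- sin z) (is_derive_cos z)).
    replace (/ cos z * (sin z / cos z)) with (- - sin z / cos z ^ 2).
    apply H. lra. field. lra.
Qed.

Lemma T_nonneg j y : 0 <= y < PI / 2 -> 0 <= Derive_n tan j y.
Proof.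
  intros Hy. assert (HD : Dpi y) by (unfold Dpi; pose proof PI_RGT_0; lra).
  assert (H : forall N j, (j <= N)%nat -> 0 <= Derive_n tan j y).
  { induction N; intros i Hi.
    - replace i with 0%nat by lia. simpl. unfold tan.
      apply Rmult_le_pos. apply sin_ge_0; pose proof PI_RGT_0; lra.
      apply Rlt_le, Rinv_0_lt_compat, cos_Dpi; auto.
    - destruct i. apply IHN; lia.
      rewrite T_rec; auto. apply Rplus_le_le_0_compat.
      destruct i; simpl; lra.
      apply sum_nonneg. intros l Hl. apply Rmult_le_pos. apply Rmult_le_pos.
      apply binom_ge0. apply IHN; lia. apply IHN; lia. }
  apply (H j); auto.
Qed.

Lemma sec_nonneg j y : 0 <= y < PI / 2 -> 0 <= Derive_n sec j y.
Proof.
  intros Hy. assert (HD : Dpi y) by (unfold Dpi; pose proof PI_RGT_0; lra).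
  assert (H : forall N j, (j <= N)%nat -> 0 <= Derive_n sec j y).
  { induction N; intros i Hi.
    - replace i with 0%nat by lia. simpl. unfold sec.
      apply Rlt_le, Rinv_0_lt_compat, cos_Dpi; auto.
    - destruct i. apply IHN; lia.
      rewrite sec_rec; auto.
      apply sum_nonneg. intros l Hl. apply Rmult_le_pos. apply Rmult_le_pos.
      apply binom_ge0. apply IHN; lia. apply T_nonneg; auto. }
  apply (H j); auto.
Qed.

Lemma AS (u u' a a' r r' : nat -> R) :
  a 0%nat = 1 -> (forall j, a' j = eps j * a j) -> (forall j, Nat.even j = false -> a j = 0) ->
  (forall m, r' m = eps m * r m) ->
  (forall m, sum_f_R0 (fun k => binom m k * u k * a (m - k)%nat) m = r m) ->
  (forall m, sum_f_R0 (fun k => binom m k * u' k * a' (m - k)%nat) m = r' m) ->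
  forall m, u' m = eps m * u m.
Proof.
  intros Ha0 Ha' Hodd Hr Hu Hu'.
  assert (H : forall N m, (m <= N)%nat -> u' m = eps m * u m).
  { induction N; intros m Hm.
    - replace m with 0%nat by lia.
      assert (A : u 0%nat = r 0%nat) by (specialize (Hu 0%nat); simpl in Hu; rewrite Ha0 in Hu; lra).
      assert (B : u' 0%nat = r' 0%nat) by (specialize (Hu' 0%nat); simpl in Hu'; rewrite Ha', Ha0 in Hu'; simpl in Hu'; lra).
      rewrite B, Hr, A. reflexivity.
    - destruct (Nat.le_gt_cases m N) as [Hle|Hgt]. apply IHN; auto.
      replace m with (S N) by lia. clear m Hm Hgt.
      specialize (Hu (S N)); specialize (Hu' (S N)).
      rewrite tech5 in Hu, Hu'. rewrite Nat.sub_diag, binom_nn in Hu, Hu'.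
      rewrite Ha' in Hu'. rewrite Ha0 in Hu, Hu'. simpl (eps 0) in Hu'.
      assert (E : sum_f_R0 (fun k => binom (S N) k * u' k * a' (S N - k)%nat) N =
                  eps (S N) * sum_f_R0 (fun k => binom (S N) k * u k * a (S N - k)%nat) N).
      { rewrite <- sum_scal. apply sum_ext. intros k Hk.
        rewrite IHN by auto. rewrite Ha'.
        destruct (Nat.even (S N - k)) eqn:Ee.
        - assert (X : eps (S N) = eps k * eps (S N - k)%nat)
            by (rewrite <- eps_add_even; [f_equal; lia | auto]).
          rewrite X. ring.
        - rewrite Hodd; auto. ring. }
      rewrite E, Hr in Hu'. rewrite <- Hu in Hu'. lra. }
  intros m. apply (H m); auto.
Qed.

Lemma parity_zero (u a r : nat -> R) (e : bool) :
  a 0%nat = 1 -> (forall j, Nat.even j = false -> a j = 0) ->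
  (forall m, Nat.even m = e -> r m = 0) ->
  (forall m, sum_f_R0 (fun k => binom m k * u k * a (m - k)%nat) m = r m) ->
  forall m, Nat.even m = e -> u m = 0.
Proof.
  intros Ha0 Hodd Hr Hu.
  assert (H : forall N m, (m <= N)%nat -> Nat.even m = e -> u m = 0).
  { induction N; intros m Hm He.
    - replace m with 0%nat by lia. replace m with 0%nat in He by lia.
      specialize (Hu 0%nat). simpl in Hu. rewrite Ha0 in Hu. rewrite Hr in Hu; auto. lra.
    - destruct (Nat.le_gt_cases m N) as [Hle|Hgt]. apply IHN; auto.
      replace m with (S N) in * by lia. clear m Hm Hgt.
      specialize (Hu (S N)). rewrite tech5, Nat.sub_diag, binom_nn, Ha0 in Hu.
      rewrite Hr in Hu; auto.
      assert (E : sum_f_R0 (fun k => binom (S N) k * u k * a (S N - k)%nat) N = 0).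
      { replace 0 with (sum_f_R0 (fun _ => 0) N).
        apply sum_ext. intros k Hk.
        destruct (Nat.even (S N - k)) eqn:Ee.
        - rewrite (IHN k); auto. ring.
          assert (Hs := Nat.even_add k (S N - k)).
          replace (k + (S N - k))%nat with (S N) in Hs by lia.
          rewrite He, Ee in Hs. destruct (Nat.even k), e; simpl in Hs; congruence.
        - rewrite Hodd; auto. ring.
        - clear. induction N; simpl; try rewrite IHN; ring. }
      rewrite E in Hu. lra. }
  intros m. apply (H m); auto.
Qed.

Lemma Dpi0 : Dpi 0.
Proof. unfold Dpi. pose proof PI_RGT_0. lra. Qed.

Lemma Sm_Dpi f : Sm Dall f -> Sm Dpi f.
Proof. intros H k y _. apply H. exact I. Qed.

Lemma sec_cos_rec m :
  sum_f_R0 (fun k => binom m k * Derive_n sec k 0 * Derive_n cos (m - k)%nat 0) m = cfam 1 m 0.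
Proof.
  change (leib (Derive_n sec) (Derive_n cos) m 0 = cfam 1 m 0).
  apply (fam_unique Dpi open_Dpi); auto using Dpi0.
  apply leib_fam. apply Sm_sec. apply Sm_Dpi, Sm_cos. apply cfam_fam.
  intros y Hy. rewrite leib_0. simpl. unfold sec. field.
  apply Rgt_not_eq, cos_Dpi; auto.
Qed.

Lemma sech_cosh_rec m :
  sum_f_R0 (fun k => binom m k * Derive_n sech k 0 * Derive_n cosh (m - k)%nat 0) m = cfam 1 m 0.
Proof.
  change (leib (Derive_n sech) (Derive_n cosh) m 0 = cfam 1 m 0).
  apply (fam_unique Dall open_Dall).
  apply leib_fam. apply Sm_sech. apply Sm_cosh. apply cfam_fam.
  intros y Hy. rewrite leib_0. simpl. unfold sech. field.
  apply Rgt_not_eq, cosh_pos'. exact I.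
Qed.

Lemma tan_cos_rec m :
  sum_f_R0 (fun k => binom m k * Derive_n tan k 0 * Derive_n cos (m - k)%nat 0) m = Derive_n sin m 0.
Proof.
  change (leib (Derive_n tan) (Derive_n cos) m 0 = Derive_n sin m 0).
  apply (fam_unique Dpi open_Dpi); auto using Dpi0.
  apply leib_fam. apply Sm_tan. apply Sm_Dpi, Sm_cos. apply Sm_Dpi, Sm_sin.
  intros y Hy. rewrite leib_0. simpl. unfold tan. field.
  apply Rgt_not_eq, cos_Dpi; auto.
Qed.

Lemma tanh_cosh_rec m :
  sum_f_R0 (fun k => binom m k * Derive_n tanh k 0 * Derive_n cosh (m - k)%nat 0) m = Derive_n sinh m 0.
Proof.
  change (leib (Derive_n tanh) (Derive_n cosh) m 0 = Derive_n sinh m 0).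
  apply (fam_unique Dall open_Dall).
  apply leib_fam. apply Sm_tanh. apply Sm_cosh. apply Sm_sinh.
  intros y Hy. rewrite leib_0. simpl. unfold tanh. field.
  apply Rgt_not_eq, cosh_pos'. exact I.
Qed.

Lemma cos_a0 : Derive_n cos 0 0 = 1.
Proof. rewrite D_cos0. reflexivity. Qed.
Lemma cos_aodd j : Nat.even j = false -> Derive_n cos j 0 = 0.
Proof. intros H. rewrite D_cos0, H. reflexivity. Qed.
Lemma cosh_cos j : Derive_n cosh j 0 = eps j * Derive_n cos j 0.
Proof.
  rewrite D_cosh0, D_cos0. destruct (Nat.even j). symmetry; apply eps_sq. ring.
Qed.

Lemma sech_sec m : Derive_n sech m 0 = eps m * Derive_n sec m 0.
Proof.
  apply (AS (fun k => Derive_n sec k 0) (fun k => Derive_n sech k 0)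
            (fun j => Derive_n cos j 0) (fun j => Derive_n cosh j 0)
            (fun m => cfam 1 m 0) (fun m => cfam 1 m 0)).
  apply cos_a0. apply cosh_cos. apply cos_aodd.
  intros k; destruct k; simpl; ring.
  apply sec_cos_rec. apply sech_cosh_rec.
Qed.

Lemma tanh_tan m : Derive_n tanh m 0 = eps m * Derive_n tan m 0.
Proof.
  apply (AS (fun k => Derive_n tan k 0) (fun k => Derive_n tanh k 0)
            (fun j => Derive_n cos j 0) (fun j => Derive_n cosh j 0)
            (fun m => Derive_n sin m 0) (fun m => Derive_n sinh m 0)).
  apply cos_a0. apply cosh_cos. apply cos_aodd.
  intros k. rewrite D_sinh0, D_sin0. destruct (Nat.even k). ring. symmetry; apply eps_sq.
  apply tan_cos_rec. apply tanh_cosh_rec.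
Qed.

Lemma sec_odd m : Nat.even m = false -> Derive_n sec m 0 = 0.
Proof.
  apply (parity_zero (fun k => Derive_n sec k 0) (fun j => Derive_n cos j 0) (fun m => cfam 1 m 0)).
  apply cos_a0. apply cos_aodd. intros k Hk; destruct k; [discriminate|reflexivity].
  apply sec_cos_rec.
Qed.

Lemma tan_even m : Nat.even m = true -> Derive_n tan m 0 = 0.
Proof.
  apply (parity_zero (fun k => Derive_n tan k 0) (fun j => Derive_n cos j 0) (fun m => Derive_n sin m 0)).
  apply cos_a0. apply cos_aodd. intros k Hk. rewrite D_sin0, Hk. reflexivity.
  apply tan_cos_rec.
Qed.

Lemma tan_half y : Dpi y -> tan (1/2 * y + PI/4) = sec y + tan y.
Proof.
  intros Hy. unfold Dpi in Hy. destruct Hy as [Hy1 Hy2]. pose proof PI_RGT_0.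
  set (a := 1/2 * y + PI/4).
  assert (Ha : 0 < a < PI/2) by (unfold a; lra).
  assert (Hs : 0 < sin a) by (apply sin_gt_0; lra).
  assert (Hc : 0 < cos a) by (apply cos_gt_0; lra).
  unfold tan, sec. replace y with (2 * a - PI/2) by (unfold a; field).
  rewrite sin_minus, cos_minus, sin_PI2, cos_PI2, sin_2a, cos_2a_sin.
  field. split; lra.
Qed.

Lemma tan_pi4 k : (1/2)^k * Derive_n tan k (PI/4) = Derive_n sec k 0 + Derive_n tan k 0.
Proof.
  assert (H := fam_unique Dpi open_Dpi
    (fun k x => (1/2)^k * Derive_n tan k (1/2 * x + PI/4))
    (fun k x => Derive_n sec k x + Derive_n tan k x)).
  replace (PI/4) with (1/2 * 0 + PI/4) by ring. apply H; auto using Dpi0.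
  - apply (fam_restrict (fun x => Dpi (1/2 * x + PI/4))).
    intros y Hy. unfold Dpi in *. pose proof PI_RGT_0. lra.
    apply fam_affine. apply Sm_tan.
  - apply fam_plus. apply Sm_sec. apply Sm_tan.
  - intros y Hy. simpl. rewrite Rmult_1_l. now apply tan_half.
Qed.

Definition D0 := fun x => 0 < x < 2 * PI.
Lemma open_D0 : open D0.
Proof. apply open_and. apply open_gt. apply open_lt. Qed.

Definition Gf k x := 1/2 * ((-1/2)^k * Derive_n tan (S k) (-1/2 * x + PI/2)).

Lemma g_eq x : D0 x -> g x = Gf 0 x.
Proof.
  intros Hx. unfold D0 in Hx. destruct Hx as [Hx1 Hx2]. pose proof PI_RGT_0. unfold Gf, g. simpl.
  set (t := -1/2 * x + PI/2).
  assert (Ht : Dpi t) by (unfold Dpi, t; lra).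
  assert (Hc := cos_Dpi t Ht).
  change (Derive (fun x => tan x) t) with (Derive tan t).
  rewrite (is_derive_unique _ _ _ (is_derive_tan t (Rgt_not_eq _ _ Hc))).
  replace x with (PI - 2 * t) by (unfold t; field).
  rewrite cos_minus, cos_PI, sin_PI, cos_2a_cos. unfold tan.
  assert (E : sin t ^ 2 = 1 - cos t ^ 2) by (pose proof (sin2_cos2 t); unfold Rsqr in *; simpl; lra).
  replace (1 - (-1 * (2 * cos t * cos t - 1) + 0 * sin (2 * t))) with (2 * (cos t * cos t)) by ring. unfold Rdiv. replace ((sin t * / cos t) ^ 2) with (sin t ^ 2 * (/ cos t)^2) by (rewrite Rpow_mult_distr; reflexivity). rewrite E. field. lra.
Qed.

Lemma Gf_fam : fam D0 Gf.
Proof.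
  apply fam_scal.
  apply (fam_restrict (fun x => Dpi (-1/2 * x + PI/2))).
  intros y Hy. unfold Dpi, D0 in *. pose proof PI_RGT_0. lra.
  apply (fam_affine Dpi (fun k => Derive_n tan (S k))). apply fam_shift, Sm_tan.
Qed.

Lemma Dg n x : D0 x -> Derive_n g n x = Gf n x.
Proof. apply (fam_Derive_n D0 open_D0 Gf g Gf_fam g_eq). Qed.

Definition ea (n : nat) : R := / INR (Factorial.fact n).
Definition phi := PSeries (PS_decr_1 ea).

Lemma ea_radius : CV_radius ea = p_infty.
Proof.
  apply CV_radius_infinite_DAlembert.
  - intros n. unfold ea. apply Rinv_neq_0_compat. apply not_0_INR, fact_neq_0.
  - apply (is_lim_seq_ext (fun n => / INR (S n))).
    + intros n. unfold ea. rewrite fact_simpl, mult_INR.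
      assert (0 < INR (Factorial.fact n)) by (apply lt_0_INR, lt_O_fact).
      assert (0 < INR (S n)) by (apply lt_0_INR; lia).
      assert (P : 0 <= / (INR (S n) * INR (Factorial.fact n)) / / INR (Factorial.fact n)).
      { apply Rlt_le. unfold Rdiv. apply Rmult_lt_0_compat; apply Rinv_0_lt_compat; auto.
        apply Rmult_lt_0_compat; auto. apply Rinv_0_lt_compat; auto. }
      rewrite (Rabs_pos_eq _ P). field. lra.
    + replace (Finite 0) with (Rbar_inv p_infty) by reflexivity.
      apply is_lim_seq_inv. apply (is_lim_seq_incr_1 INR). apply is_lim_seq_INR. discriminate.
Qed.

Lemma phi_radius : CV_radius (PS_decr_1 ea) = p_infty.
Proof. rewrite CV_radius_decr_1. apply ea_radius. Qed.

Lemma exp_phi t : exp t = 1 + t * phi t.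
Proof.
  rewrite exp_Reals. unfold phi. rewrite PSeries_decr_1.
  unfold ea at 1. simpl. field.
  exists (exp t). apply is_exp_Reals.
Qed.

Lemma phi0 : phi 0 = 1.
Proof. unfold phi. rewrite PSeries_0. unfold PS_decr_1, ea. simpl. field. Qed.

Lemma phi_nz t : phi t <> 0.
Proof.
  destruct (Req_dec t 0) as [->|Ht]. rewrite phi0. lra.
  intros H. assert (E := exp_phi t). rewrite H, Rmult_0_r, Rplus_0_r in E.
  rewrite <- exp_0 in E. apply exp_inv in E. auto.
Qed.

Lemma bern_phi t : bern_gen t = / phi t.
Proof.
  unfold bern_gen. destruct (Req_EM_T t 0) as [->|Ht].
  - rewrite phi0. field.
  - rewrite (exp_phi t). replace (1 + t * phi t - 1) with (t * phi t) by ring. field. split; auto. apply phi_nz.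
Qed.

Lemma Sm_phi : Sm Dall phi.
Proof.
  intros k y _.
  assert (E : forall x, Derive_n phi k x = PSeries (PS_derive_n k (PS_decr_1 ea)) x).
  { intros x. apply Derive_n_PSeries. rewrite phi_radius. exact I. }
  simpl. apply Derive_correct.
  apply (ex_derive_ext (PSeries (PS_derive_n k (PS_decr_1 ea)))).
  intros; symmetry; apply E.
  exists (PSeries (PS_derive (PS_derive_n k (PS_decr_1 ea))) y).
  apply is_derive_PSeries. rewrite CV_radius_derive_n, phi_radius. exact I.
Qed.

Lemma Sm_bern : Sm Dall bern_gen.
Proof.
  apply (Sm_ext _ (fun y => / phi y)). intros; symmetry; apply bern_phi.
  apply Sm_inv. apply open_Dall. apply Sm_phi. intros; apply phi_nz.
Qed.

Definition Bf j y := Derive_n bern_gen j y + 1/2 * idfam j y.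
Lemma Bf_fam : fam Dall Bf.
Proof. apply fam_plus. apply Sm_bern. apply fam_scal, idfam_fam. Qed.

Definition Ff k t := 4 ^ k * Bf k (4 * t + 0) + -1 * (2 ^ k * Bf k (2 * t + 0)).
Lemma Ff_fam : fam Dall Ff.
Proof.
  apply fam_plus.
  apply (fam_restrict (fun x => Dall (4 * x + 0))). intros; exact I.
  apply (fam_affine Dall Bf 4 0 Bf_fam).
  apply fam_scal.
  apply (fam_restrict (fun x => Dall (2 * x + 0))). intros; exact I.
  apply (fam_affine Dall Bf 2 0 Bf_fam).
Qed.

Definition K k t := t * Derive_n tanh k t + INR k * Derive_n tanh (pred k) t.

Lemma isd_eq (f : R -> R) y l l' : is_derive f y l -> l = l' -> is_derive f y l'.
Proof. intros H ->; auto. Qed.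

Lemma K_fam : fam Dall K.
Proof.
  intros k y _. unfold K.
  assert (H1 := Sm_tanh k y I). assert (H2 := Sm_tanh (pred k) y I).
  eapply isd_eq.
  apply (is_derive_plus (fun t => t * Derive_n tanh k t) (fun t => INR k * Derive_n tanh (pred k) t)).
  apply (is_derive_mult (fun t => t) (Derive_n tanh k)). apply isd_id. apply H1.
  intros; apply Rmult_comm.
  apply (is_derive_scal (Derive_n tanh (pred k))). apply H2.
  simpl pred. destruct k.
  - simpl. change (1 * Derive_n tanh 0 y + y * Derive_n tanh 1 y + 0 * Derive_n tanh 1 y =
      y * Derive_n tanh 1 y + 1 * Derive_n tanh 0 y). ring.
  - change (1 * Derive_n tanh (S k) y + y * Derive_n tanh (S (S k)) y + INR (S k) * Derive_n tanh (S k) y =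
      y * Derive_n tanh (S (S k)) y + INR (S (S k)) * Derive_n tanh (S k) y).
    rewrite (S_INR (S k)). ring.
Qed.

Lemma bern_id t : bern_gen (4 * t) + 1/2 * (4 * t) - (bern_gen (2 * t) + 1/2 * (2 * t)) = t * tanh t.
Proof.
  destruct (Req_dec t 0) as [->|Ht].
  - rewrite !Rmult_0_r. unfold bern_gen. destruct (Req_EM_T 0 0); [|congruence]. ring.
  - unfold bern_gen. destruct (Req_EM_T (4 * t) 0) as [H|_]. exfalso; lra.
    destruct (Req_EM_T (2 * t) 0) as [H|_]. exfalso; lra.
    unfold tanh, sinh, cosh. rewrite exp_Ropp.
    replace (4 * t) with ((t + t) + (t + t)) by ring. replace (2 * t) with (t + t) by ring.
    rewrite !exp_plus.
    set (p := exp t). assert (Hp : 0 < p) by apply exp_pos.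
    assert (Hp1 : p <> 1). { intros E. apply Ht. apply exp_inv. rewrite exp_0. auto. }
    assert (Hq : p * p - 1 <> 0).
    { replace (p * p - 1) with ((p - 1) * (p + 1)) by ring.
      apply Rmult_integral_contrapositive; split; lra. }
    assert (Hq2 : p * p * (p * p) - 1 <> 0).
    { replace (p * p * (p * p) - 1) with ((p * p - 1) * (p * p + 1)) by ring.
      apply Rmult_integral_contrapositive; split; auto. nra. }
    field. repeat split; auto; try lra. nra.
Qed.

Lemma bern_tanh m : (2 <= m)%nat ->
  INR m * Derive_n tanh (pred m) 0 = (4 ^ m - 2 ^ m) * bernoulli m.
Proof.
  intros Hm.
  assert (H := fam_unique Dall open_Dall Ff K Ff_fam K_fam).
  assert (E : Ff m 0 = K m 0).
  { apply H; [|exact I]. intros y _. unfold Ff, K, Bf. simpl.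
    rewrite <- (bern_id y). replace (4 * y + 0) with (4 * y) by ring.
    replace (2 * y + 0) with (2 * y) by ring. ring. }
  unfold Ff, K, Bf in E. replace (4 * 0 + 0) with 0 in E by ring.
  replace (2 * 0 + 0) with 0 in E by ring.
  destruct m as [|[|m]]; try lia. simpl idfam in E. unfold bernoulli. lra.
Qed.

Lemma mvt (f df : R -> R) a b : a <= b ->
  (forall z, a <= z <= b -> is_derive f z (df z)) ->
  exists c, a <= c <= b /\ f b - f a = df c * (b - a).
Proof.
  intros Hab Hd.
  destruct (MVT_gen f a b df) as [c [Hc E]].
  - intros z Hz. rewrite Rmin_left, Rmax_right in Hz by lra. apply Hd; lra.
  - intros z Hz. rewrite Rmin_left, Rmax_right in Hz by lra.
    apply continuity_pt_filterlim. apply (ex_derive_continuous f).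
    exists (df z). apply Hd; lra.
  - rewrite Rmin_left, Rmax_right in Hc by lra. exists c; auto.
Qed.

Lemma incr (f df : R -> R) a b : a <= b ->
  (forall z, a <= z <= b -> is_derive f z (df z)) ->
  (forall z, a <= z <= b -> 0 <= df z) -> f a <= f b.
Proof.
  intros Hab Hd Hp. destruct (mvt f df a b Hab Hd) as [c [Hc E]].
  assert (0 <= df c * (b - a)) by (apply Rmult_le_pos; [apply Hp; auto|lra]). lra.
Qed.

Section Conv.
Variables P P1 P2 : R -> R.
Hypothesis HP : forall x, D0 x -> is_derive P x (P1 x).
Hypothesis HP1 : forall x, D0 x -> is_derive P1 x (P2 x).
Hypothesis HP2 : forall x, 0 < x <= PI -> 0 <= P2 x.

Lemma P1_mono a b : 0 < a -> a <= b -> b <= PI -> P1 a <= P1 b.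
Proof.
  intros Ha Hab Hb. pose proof PI_RGT_0.
  apply (incr P1 P2); auto.
  intros z Hz. apply HP1. unfold D0; lra.
  intros z Hz. apply HP2; lra.
Qed.

Lemma midpoint x y : 0 < x -> x <= y -> x + y <= PI -> 2 * P ((x + y) / 2) <= P x + P y.
Proof.
  intros Hx Hxy Hs. pose proof PI_RGT_0. set (m := (x + y) / 2).
  destruct (mvt P P1 x m) as [c1 [Hc1 E1]]. unfold m; lra.
  intros z Hz. apply HP. unfold D0, m in *; lra.
  destruct (mvt P P1 m y) as [c2 [Hc2 E2]]. unfold m; lra.
  intros z Hz. apply HP. unfold D0, m in *; lra.
  assert (P1 c1 <= P1 c2) by (apply P1_mono; unfold m in *; lra).
  assert (P1 c1 * (m - x) <= P1 c2 * (y - m)).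
  { replace (y - m) with (m - x) by (unfold m; field). apply Rmult_le_compat_r; auto.
    unfold m; lra. }
  lra.
Qed.

Lemma psi_mono s : 0 < s -> s <= PI -> P s - 2 * P (s / 2) <= P PI - 2 * P (PI / 2).
Proof.
  intros Hs Hs2. pose proof PI_RGT_0.
  apply (incr (fun u => P u - 2 * P (u / 2)) (fun u => P1 u - 2 * (/2 * P1 (u / 2)))); auto.
  - intros z Hz.
    apply (is_derive_minus P (fun u => 2 * P (u / 2))).
    apply HP; unfold D0; lra.
    apply (is_derive_scal (fun u => P (u / 2))).
    apply (is_derive_comp P (fun u => u / 2) z (P1 (z / 2)) (/ 2)).
    apply HP; unfold D0; lra.
    auto_derive; auto. field.
  - intros z Hz. assert (P1 (z / 2) <= P1 z) by (apply P1_mono; lra). lra.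
Qed.

Lemma conv_main x y : 0 < x -> 0 < y -> x + y <= PI ->
  2 * P (PI / 2) - P PI <= P x + P y - P (x + y).
Proof.
  intros Hx Hy Hs.
  assert (M : 2 * P ((x + y) / 2) <= P x + P y).
  { destruct (Rle_dec x y). apply midpoint; auto.
    rewrite (Rplus_comm x y), (Rplus_comm (P x)). apply midpoint; lra. }
  assert (Q := psi_mono (x + y) ltac:(lra) Hs). lra.
Qed.
End Conv.

Lemma sgn n : (-1) ^ n * (-1/2) ^ n = (1/2) ^ n.
Proof. rewrite <- Rpow_mult_distr. f_equal. field. Qed.

Lemma sgn2 n : (-1) ^ n * (-1) ^ n = 1.
Proof. rewrite <- Rpow_mult_distr. replace (-1 * -1) with 1 by ring. apply pow1. Qed.

Lemma Rabs_eps k : Rabs (eps k) = 1.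
Proof.
  pose proof (eps_sq k). pose proof (Rabs_pos (eps k)).
  assert (Rabs (eps k) * Rabs (eps k) = 1) by (rewrite <- Rabs_mult, H; apply Rabs_R1).
  nra.
Qed.

Definition Pn n z := (-1) ^ n * Gf n z.
Definition V n := 2 * Pn n (PI / 2) - Pn n PI.

Lemma Pn_ineq n x y : 0 < x -> 0 < y -> x + y <= PI ->
  V n <= Pn n x + Pn n y - Pn n (x + y).
Proof.
  apply (conv_main (Pn n) (fun z => (-1) ^ n * Gf (S n) z) (fun z => (-1) ^ n * Gf (S (S n)) z)).
  - intros z Hz. apply (is_derive_scal (Gf n)). apply Gf_fam; auto.
  - intros z Hz. apply (is_derive_scal (Gf (S n))). apply Gf_fam; auto.
  - intros z Hz. pose proof PI_RGT_0. unfold Gf.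
    replace ((-1) ^ n * (1 / 2 * ((-1 / 2) ^ S (S n) * Derive_n tan (S (S (S n))) (-1 / 2 * z + PI / 2))))
      with (1/2 * (1/4) * ((-1) ^ n * (-1/2) ^ n) * Derive_n tan (S (S (S n))) (-1 / 2 * z + PI / 2))
      by (simpl; field).
    rewrite sgn. apply Rmult_le_pos. apply Rmult_le_pos. lra. apply pow_le; lra.
    apply T_nonneg. lra.
Qed.

Lemma Dg_P n z : D0 z -> Derive_n g n z = (-1) ^ n * Pn n z.
Proof.
  intros Hz. rewrite Dg; auto. unfold Pn. rewrite <- Rmult_assoc, sgn2. ring.
Qed.

Lemma V_val n : V n = 2 * (Derive_n sec (S n) 0 + Derive_n tan (S n) 0)
                       - (1/2) ^ (S n) * Derive_n tan (S n) 0.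
Proof.
  unfold V, Pn, Gf.
  replace (-1/2 * (PI/2) + PI/2) with (PI/4) by field.
  replace (-1/2 * PI + PI/2) with 0 by field.
  rewrite <- tan_pi4.
  assert (E : forall X, (-1) ^ n * (1 / 2 * ((-1 / 2) ^ n * X)) = (1/2) ^ (S n) * X).
  { intros X. simpl. rewrite <- (sgn n). ring. }
  rewrite !E. ring.
Qed.

Lemma lam_eq n : Nat.even n = true -> lambda_n n = V n.
Proof.
  intros Hn. rewrite V_val.
  assert (Hs : Nat.even (S n) = false) by (rewrite Nat.even_succ; unfold Nat.odd; rewrite Hn; reflexivity).
  rewrite (sec_odd _ Hs).
  assert (HT : 0 <= Derive_n tan (S n) 0) by (apply T_nonneg; pose proof PI_RGT_0; lra).
  set (Tk := Derive_n tan (S n) 0) in *.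
  assert (HB := bern_tanh (n + 2) ltac:(lia)).
  replace (pred (n + 2)) with (S n) in HB by lia.
  rewrite tanh_tan in HB. fold Tk in HB.
  unfold lambda_n. set (B := bernoulli (n + 2)) in *.
  set (w := 2 ^ S n).
  assert (Hw : 2 <= w) by (unfold w; simpl; assert (1 <= 2 ^ n) by (apply pow_R1_Rle; lra); lra).
  assert (Hr : (1/2) ^ S n = / w).
  { unfold w. apply Rmult_eq_reg_r with (2 ^ S n). rewrite <- Rpow_mult_distr.
    replace (1/2 * 2) with 1 by field. rewrite pow1, Rinv_l. reflexivity.
    apply pow_nonzero; lra. apply pow_nonzero; lra. }
  assert (Hq : 2 ^ (n + 2) = 2 * w) by (unfold w; replace (n + 2)%nat with (S (S n)) by lia; reflexivity).
  assert (H4 : 4 ^ (n + 2) = (2 * w) * (2 * w)).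
  { rewrite <- Hq. rewrite <- Rpow_mult_distr. f_equal; ring. }
  rewrite Hq, H4 in HB. rewrite Hq, Hr.
  rewrite plus_INR in *. simpl (INR 2) in *.
  assert (Hm : 0 < INR n + (1 + 1)) by (pose proof (pos_INR n); lra).
  assert (HD : 0 < 2 * w * (2 * w) - 2 * w) by nra.
  assert (EB : B = eps (S n) * ((INR n + (1 + 1)) * Tk / (2 * w * (2 * w) - 2 * w))).
  { apply Rmult_eq_reg_l with (2 * w * (2 * w) - 2 * w). rewrite <- HB. field. lra. lra. }
  rewrite EB, Rabs_mult, Rabs_eps, Rabs_pos_eq.
  field. repeat split; lra.
  apply Rmult_le_pos. apply Rmult_le_pos; lra. apply Rlt_le, Rinv_0_lt_compat; lra.
Qed.

Lemma mu_eq n : Nat.odd n = true -> mu_n n = V n.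
Proof.
  intros Hn. rewrite V_val.
  assert (Hs : Nat.even (S n) = true) by (rewrite Nat.even_succ; auto).
  rewrite (tan_even _ Hs).
  unfold mu_n, euler_num. replace (n + 1)%nat with (S n) by lia.
  change (Derive_n (fun t => / cosh t) (S n) 0) with (Derive_n sech (S n) 0).
  rewrite sech_sec, Rabs_mult, Rabs_eps, Rabs_pos_eq. ring.
  apply sec_nonneg. pose proof PI_RGT_0; lra.
Qed.

Theorem theorem2 :
  forall n : nat,
    (Nat.even n = true ->
       (forall x y : R, 0 < x -> 0 < y -> x + y <= PI ->
          lambda_n n <= Derive_n g n x + Derive_n g n y - Derive_n g n (x + y)) /\
       (forall c : R,
          (forall x y : R, 0 < x -> 0 < y -> x + y <= PI ->
             c <= Derive_n g n x + Derive_n g n y - Derive_n g n (x + y)) ->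
          c <= lambda_n n)) /\
    (Nat.odd n = true ->
       (forall x y : R, 0 < x -> 0 < y -> x + y <= PI ->
          mu_n n <= Derive_n g n (x + y) - Derive_n g n x - Derive_n g n y) /\
       (forall c : R,
          (forall x y : R, 0 < x -> 0 < y -> x + y <= PI ->
             c <= Derive_n g n (x + y) - Derive_n g n x - Derive_n g n y) ->
          c <= mu_n n)).
Proof.
  intros n. pose proof PI_RGT_0.
  assert (Hval : forall x y, 0 < x -> 0 < y -> x + y <= PI ->
     Derive_n g n x + Derive_n g n y - Derive_n g n (x + y) =
     (-1) ^ n * (Pn n x + Pn n y - Pn n (x + y))).
  { intros x y Hx Hy Hs. rewrite !Dg_P; unfold D0; try ring; lra. }
  assert (Hpi : PI / 2 + PI / 2 = PI) by field.
  assert (Hopt : Pn n (PI/2) + Pn n (PI/2) - Pn n (PI/2 + PI/2) = V n).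
  { rewrite Hpi. unfold V. ring. }
  split; intros Hp.
  - assert (S1 : (-1) ^ n = 1).
    { destruct (proj1 (Nat.even_spec n) Hp) as [p ->]. apply pow_1_even. }
    rewrite (lam_eq n Hp). split.
    + intros x y Hx Hy Hs. rewrite Hval, S1; auto. rewrite Rmult_1_l. now apply Pn_ineq.
    + intros c Hc. specialize (Hc (PI/2) (PI/2) ltac:(lra) ltac:(lra) ltac:(lra)).
      rewrite Hval, S1, Rmult_1_l, Hopt in Hc; auto; lra.
  - assert (S1 : (-1) ^ n = -1).
    { destruct (proj1 (Nat.odd_spec n) Hp) as [p ->]. rewrite Nat.add_1_r. apply pow_1_odd. }
    rewrite (mu_eq n Hp).
    assert (Hval2 : forall x y, 0 < x -> 0 < y -> x + y <= PI ->
      Derive_n g n (x + y) - Derive_n g n x - Derive_n g n y = Pn n x + Pn n y - Pn n (x + y)).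
    { intros x y Hx Hy Hs. assert (E := Hval x y Hx Hy Hs). rewrite S1 in E. lra. }
    split.
    + intros x y Hx Hy Hs. rewrite Hval2; auto. now apply Pn_ineq.
    + intros c Hc. specialize (Hc (PI/2) (PI/2) ltac:(lra) ltac:(lra) ltac:(lra)).
      rewrite Hval2, Hopt in Hc; lra.
Qed.
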